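(* For $\mathbf{x}=(x_1,\dots,x_N)^{\mathrm T}\in\mathbb{R}^N$ define $$\ell_{\mathrm{bin}}(\mathbf{x})=N\sum_{n=1}^N x_n^4-\Big(\sum_{n=1}^N x_n^2\Big)^2.$$ Then $\ell_{\mathrm{bin}}(\mathbf{x})\ge0$ for all $\mathbf{x}$, and $\ell_{\mathrm{bin}}(\mathbf{x})=0$ if and only if $\mathbf{x}\in\{-\alpha,+\alpha\}^N$ for some $\alpha\in\mathbb{R}$. Furthermore, $\ell_{\mathrm{bin}}$ has no spurious stationary points: $\nabla\ell_{\mathrm{bin}}(\mathbf{x})=\mathbf{0}$ holds only if $\mathbf{x}\in\{-\alpha,+\alpha\}^N$ for some $\alpha\in\mathbb{R}$.
   Context: A spurious stationary point of a differentiable function $\ell$ whose zero set is $\mathcal{X}$ is a point $\mathbf{x}\notin\mathcal{X}$ with $\nabla\ell(\mathbf{x})=\mathbf{0}$. *)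

(* Defs.v *)
From HB Require Import structures.
From mathcomp Require Import all_boot all_order all_algebra.
From mathcomp Require Import all_classical all_reals all_analysis.
Set Implicit Arguments. Unset Strict Implicit. Unset Printing Implicit Defensive.
Import Order.TTheory GRing.Theory Num.Theory.
Import numFieldNormedType.Exports.
Local Open Scope ring_scope.

Definition lbin (R : realType) (N : nat) (x : 'rV[R]_N) : R :=
  N%:R * (\sum_(n < N) x ord0 n ^+ 4) - (\sum_(n < N) x ord0 n ^+ 2) ^+ 2.

Definition grad (R : realType) (N : nat) (f : 'rV[R]_N -> R) (x : 'rV[R]_N)
  : 'rV[R]_N := \row_(i < N) ('D_(delta_mx ord0 i) f x).

Definition binary_vec (R : realType) (N : nat) (x : 'rV[R]_N) : Prop :=
  exists alpha : R, forall i : 'I_N, x ord0 i = alpha \/ x ord0 i = - alpha.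

(* Main.v *)
Require Import Defs.
From HB Require Import structures.
From mathcomp Require Import all_boot all_order all_algebra.
From mathcomp Require Import all_classical all_reals all_analysis.
From mathcomp Require Import ring.
Import Order.TTheory GRing.Theory Num.Theory.
Import numFieldNormedType.Exports.
Local Open Scope classical_set_scope.
Local Open Scope ring_scope.

Lemma ident (R : realDomainType) (N : nat) (a : 'I_N -> R) :
  \sum_(i < N) \sum_(j < N) (a i - a j) ^+ 2 =
  2%:R * (N%:R * \sum_(i < N) a i ^+ 2 - (\sum_(i < N) a i) ^+ 2).
Proof.
have inner : forall i, \sum_(j < N) (a i - a j) ^+ 2 =
   N%:R * a i ^+ 2 - 2%:R * a i * \sum_(j < N) a j + \sum_(j < N) a j ^+ 2.
  move=> i; under eq_bigr do rewrite sqrrB.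
  rewrite big_split /= sumrB sumr_const card_ord sumrMnl -mulr_sumr.
  rewrite mulr_natl; ring.
under eq_bigr do rewrite inner.
rewrite big_split sumrB /= sumr_const card_ord -mulr_sumr -mulr_suml.
by rewrite -mulr_sumr -mulr_natr; ring.
Qed.

Section S.
Variables (R : realType) (N : nat).
Definition crd (n : 'I_N) := (fun y : 'rV[R]_N => y ord0 n).

Global Instance is_derive_crd (x v : 'rV[R]_N) (j : 'I_N) :
  is_derive x v (crd j) (v ord0 j).
Proof.
have H : (fun h : R => h^-1 *: ((crd j \o shift x) (h *: v)
           - crd j x)) @ 0^' --> v ord0 j.
  apply: cvg_near_cst; near=> h.
  rewrite /crd /= !mxE addrK /GRing.scale /= mulrA mulVf ?mul1r //.
  near: h; exact: nbhs_dnbhs_neq.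
apply: DeriveDef; first by apply/cvg_ex; exists (v ord0 j).
exact: cvg_lim H.
Unshelve. all: by end_near.
Qed.

Lemma lbin_fun : (@lbin R N) = (N%:R \*: (\sum_(n < N) (crd n) ^+ 4))
   - (\sum_(n < N) (crd n) ^+ 2) ^+ 2.
Proof. by apply/funext => y; rewrite /lbin /= !fct_sumE. Qed.

Lemma grad_lbin (x : 'rV[R]_N) i :
  (grad (@lbin R N) x) ord0 i =
   4%:R * x ord0 i * (N%:R * x ord0 i ^+ 2 - \sum_(n < N) x ord0 n ^+ 2).
Proof.
rewrite mxE lbin_fun derive_val.
have E : forall c : 'I_N -> R, \sum_(j < N) c j *: delta_mx (ord0 : 'I_1) i ord0 j = c i.
  move=> c; rewrite (bigD1 i) //= big1 ?addr0; first by rewrite mxE !eqxx /= scaler1.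
  by move=> j /negbTE ji; rewrite mxE ji andbF scaler0.
rewrite !E /crd fct_sumE /= /GRing.scale /=.
under eq_bigr do rewrite exprfctE.
rewrite /=; ring.
Qed.

Lemma twice_lbin (x : 'rV[R]_N) :
  2%:R * lbin x = \sum_(i < N) \sum_(j < N) (x ord0 i ^+ 2 - x ord0 j ^+ 2) ^+ 2.
Proof.
rewrite ident /lbin; congr (_ * (_ * _ - _)).
by apply: eq_bigr => i _; rewrite -exprM.
Qed.

Lemma lbin_ge0 (x : 'rV[R]_N) : 0 <= lbin x.
Proof.
have : 0 <= 2%:R * lbin x.
  by rewrite twice_lbin; apply: sumr_ge0 => i _; apply: sumr_ge0 => j _; apply: sqr_ge0.
by rewrite pmulr_rge0.
Qed.

Lemma sq_eq_binary (x : 'rV[R]_N) :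
  (forall i j, x ord0 i ^+ 2 = x ord0 j ^+ 2) -> binary_vec x.
Proof.
case: N x => [|n] x H.
  by exists 0 => -[].
exists (x ord0 ord0) => i.
by have /eqP := H i ord0; rewrite eqf_sqr => /orP[/eqP->|/eqP->]; [left|right].
Qed.

Lemma binary_sq (x : 'rV[R]_N) : binary_vec x -> forall i j, x ord0 i ^+ 2 = x ord0 j ^+ 2.
Proof.
by move=> [a H] i j; case: (H i) => ->; case: (H j) => ->; rewrite ?sqrrN.
Qed.

End S.

Theorem mainTheorem3 (R : realType) (N : nat) :
  (forall x : 'rV[R]_N, 0 <= lbin x) /\
  (forall x : 'rV[R]_N, lbin x = 0 <-> binary_vec x) /\
  (forall x : 'rV[R]_N, grad (@lbin R N) x = 0 -> binary_vec x).
Proof.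
split; first exact: lbin_ge0.
split.
  move=> x; split.
    move=> H0; apply: sq_eq_binary => i j.
    have H2 : \sum_(i < N) \sum_(j < N) (x ord0 i ^+ 2 - x ord0 j ^+ 2) ^+ 2 = 0.
      by rewrite -twice_lbin H0 mulr0.
    have Hi := psumr_eq0P (fun i _ => sumr_ge0 _ (fun j _ => sqr_ge0 _)) H2 (isT : true).
    have Hij := psumr_eq0P (fun j _ => sqr_ge0 _) (Hi i) (isT : true).
    by apply/eqP; rewrite -subr_eq0 -sqrf_eq0 Hij.
  move=> /binary_sq Hb.
  have : 2%:R * lbin x = 0.
    rewrite twice_lbin big1 // => i _; rewrite big1 // => j _.
    by rewrite (Hb i j) subrr expr0n.
  by move/eqP; rewrite mulf_eq0 pnatr_eq0 /= => /eqP.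
move=> x /rowP G.
have Gi : forall i, N%:R * x ord0 i ^+ 2 = \sum_(n < N) x ord0 n ^+ 2 \/ x ord0 i = 0.
  move=> i; have := G i; rewrite grad_lbin mxE => /eqP.
  rewrite !mulf_eq0 pnatr_eq0 /= subr_eq0 => /orP[/eqP->|/eqP->]; by [right|left].
set S := \sum_(n < N) x ord0 n ^+ 2.
have S0 : 0 <= S by apply: sumr_ge0 => n _; apply: sqr_ge0.
have Hsum : \sum_(i < N) (S - N%:R * x ord0 i ^+ 2) = 0.
  rewrite sumrB sumr_const card_ord -mulr_sumr -/S mulr_natl subrr //.
have Hnn : forall i : 'I_N, true -> 0 <= S - N%:R * x ord0 i ^+ 2.
  move=> i _; case: (Gi i) => [->|->]; first by rewrite subrr.
  by rewrite expr0n mulr0 subr0.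
have Hall := psumr_eq0P Hnn Hsum.
apply: sq_eq_binary => i j.
have NP : (0 < N)%N := leq_ltn_trans (leq0n _) (ltn_ord i).
have NZ : (N%:R : R) != 0 by rewrite pnatr_eq0 -lt0n NP.
apply: (mulfI NZ).
have /eqP := Hall i isT; have /eqP := Hall j isT; rewrite !subr_eq0 => /eqP <- /eqP <- //.
Qed.
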